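(* For every $n$, $\mu_n>0$, $\theta\in\mathbb R$ and $x\in\mathbb R$, $$F_{A,n,\theta}(x)=\mathbf 1(n^{1/2}\theta+x\ge0)\,\Phi\big(z^{(2)}_{n,\theta}(x)\big)+\mathbf 1(n^{1/2}\theta+x<0)\,\Phi\big(z^{(1)}_{n,\theta}(x)\big).$$ Consequently the distribution of $n^{1/2}(\hat\theta_A-\theta)$ is the sum of an atom of mass $\Phi(n^{1/2}(-\theta+\mu_n))-\Phi(n^{1/2}(-\theta-\mu_n))$ at the point $-n^{1/2}\theta$ and an absolutely continuous part with Lebesgue density $$\tfrac12\Big\{\mathbf 1(n^{1/2}\theta+x>0)\,\phi\big(z^{(2)}_{n,\theta}(x)\big)(1+t_{n,\theta}(x))+\mathbf 1(n^{1/2}\theta+x<0)\,\phi\big(z^{(1)}_{n,\theta}(x)\big)(1-t_{n,\theta}(x))\Big\},$$ where $t_{n,\theta}(x)=\tfrac12(n^{1/2}\theta+x)\big/\big(((n^{1/2}\theta+x)/2)^2+n\mu_n^2\big)^{1/2}$.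
   Context: Gaussian location model: for each sample size $n$, $y_1,\dots,y_n$ are i.i.d. $N(\theta,1)$ with $\theta\in\mathbb R$ unknown; $\bar y$ is their mean. $P_{n,\theta}$ denotes the probability governing a sample of size $n$ when $\theta$ is the true parameter. Given a nonrandom tuning parameter $\mu_n>0$, the adaptive LASSO estimator is $\hat\theta_A=0$ if $|\bar y|\le\mu_n$ and $\hat\theta_A=\bar y-\mu_n^2/\bar y$ if $|\bar y|>\mu_n$. $F_{A,n,\theta}(x)=P_{n,\theta}(n^{1/2}(\hat\theta_A-\theta)\le x)$. $\Phi,\phi$ are the standard normal cdf and density. For $x\in\mathbb R$, $$z^{(1)}_{n,\theta}(x)=-\frac{n^{1/2}\theta-x}{2}-\sqrt{\Big(\frac{n^{1/2}\theta+x}{2}\Big)^2+n\mu_n^2},\qquad z^{(2)}_{n,\theta}(x)=-\frac{n^{1/2}\theta-x}{2}+\sqrt{\Big(\frac{n^{1/2}\theta+x}{2}\Big)^2+n\mu_n^2}.$$ *)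

(* Defs.v *)
From Stdlib Require Import Reals Lra ClassicalEpsilon.
Open Scope R_scope.

Definition phi (u : R) : R := exp (- (u ^ 2) / 2) / sqrt (2 * PI).

Definition ImproperIntegralR (f : R -> R) (v : R) : Prop :=
  forall eps : R, 0 < eps -> exists M : R, forall a b : R, a <= - M -> M <= b ->
    exists pr : Riemann_integrable f a b, Rabs (RiemannInt pr - v) < eps.

Definition ImproperIntegralTo (f : R -> R) (x v : R) : Prop :=
  forall eps : R, 0 < eps -> exists M : R, forall a : R, a <= - M ->
    exists pr : Riemann_integrable f a x, Rabs (RiemannInt pr - v) < eps.

(* The value of the improper integrals (chosen by classical description;
   it is the integral whenever the integral exists). *)
Definition IntR (f : R -> R) : R :=
  epsilon (inhabits 0) (fun v => ImproperIntegralR f v).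
Definition IntTo (f : R -> R) (x : R) : R :=
  epsilon (inhabits 0) (fun v => ImproperIntegralTo f x v).

Definition Phi (z : R) : R := IntTo phi z.

(* Adaptive LASSO estimator as a function of the sample mean ybar. *)
Definition thetaA (mu ybar : R) : R :=
  if Rle_dec (Rabs ybar) mu then 0 else ybar - mu ^ 2 / ybar.

(* Density of the sample mean of n i.i.d. N(theta,1) observations: N(theta,1/n). *)
Definition ybar_density (n : nat) (theta y : R) : R :=
  sqrt (INR n) * phi (sqrt (INR n) * (y - theta)).

(* F_{A,n,theta}(x) = P_{n,theta}( n^{1/2} (thetaA - theta) <= x ). *)
Definition F_A (n : nat) (mu theta x : R) : R :=
  IntR (fun y => (if Rle_dec (sqrt (INR n) * (thetaA mu y - theta)) x then 1 else 0)
                 * ybar_density n theta y).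

Definition z1 (n : nat) (mu theta x : R) : R :=
  - (sqrt (INR n) * theta - x) / 2
  - sqrt (((sqrt (INR n) * theta + x) / 2) ^ 2 + INR n * mu ^ 2).

Definition z2 (n : nat) (mu theta x : R) : R :=
  - (sqrt (INR n) * theta - x) / 2
  + sqrt (((sqrt (INR n) * theta + x) / 2) ^ 2 + INR n * mu ^ 2).

Definition t_nt (n : nat) (mu theta x : R) : R :=
  ((sqrt (INR n) * theta + x) / 2)
  / sqrt (((sqrt (INR n) * theta + x) / 2) ^ 2 + INR n * mu ^ 2).


Definition ac_density (n : nat) (mu theta x : R) : R :=
  / 2 * ( (if Rlt_dec 0 (sqrt (INR n) * theta + x) then 1 else 0)
            * phi (z2 n mu theta x) * (1 + t_nt n mu theta x)
        + (if Rlt_dec (sqrt (INR n) * theta + x) 0 then 1 else 0)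
            * phi (z1 n mu theta x) * (1 - t_nt n mu theta x)).

Definition atom_mass (n : nat) (mu theta : R) : R :=
  Phi (sqrt (INR n) * (- theta + mu)) - Phi (sqrt (INR n) * (- theta - mu)).

(* Main.v *)
Require Import Defs.
From Stdlib Require Import Reals Lra ClassicalEpsilon FunctionalExtensionality PropExtensionality Lia.
From Coquelicot Require Import Coquelicot.
Open Scope R_scope.

Lemma phi_ex_derive x : ex_derive phi x.
Proof. unfold phi. auto_derive. assert (0 < PI) by apply PI_RGT_0. lra. Qed.

Lemma phi_cont x : continuous phi x.
Proof. apply (@ex_derive_continuous R_AbsRing R_NormedModule); apply phi_ex_derive. Qed.

Lemma phi_ex_RInt a b : ex_RInt phi a b.
Proof. apply (@ex_RInt_continuous R_CompleteNormedModule); intros; apply phi_cont. Qed.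

Lemma phi_ge0 x : 0 <= phi x.
Proof. unfold phi. apply Rle_mult_inv_pos. left; apply exp_pos.
  apply sqrt_lt_R0. assert (0 < PI) by apply PI_RGT_0. lra. Qed.

Lemma phi_bound x : phi x <= exp (x + /2).
Proof.
  unfold phi.
  assert (Hs : 1 <= sqrt (2*PI)).
  { rewrite <- sqrt_1. apply sqrt_le_1_alt. pose proof PI2_1. lra. }
  apply Rle_trans with (exp (- x ^ 2 / 2)).
  - unfold Rdiv at 2. apply Rle_trans with (exp (- x ^ 2 / 2) * 1); [|lra].
    apply Rmult_le_compat_l. left; apply exp_pos.
    rewrite <- Rinv_1. apply Rinv_le_contravar; lra.
  - destruct (Req_dec (- x ^ 2 / 2) (x + /2)) as [E|E]. rewrite E; lra.
    left. apply exp_increasing. assert (0 <= (x+1)^2) by (apply pow2_ge_0). assert (- x ^ 2 / 2 <= x + /2) by nra. lra.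
Qed.

Lemma expb_RInt a b : is_RInt (fun u => exp (u + /2)) a b (exp (b + /2) - exp (a + /2)).
Proof.
  apply (@is_RInt_derive R_CompleteNormedModule (fun u => exp (u + /2))).
  - intros x _. auto_derive. auto. ring.
  - intros x _. apply (@ex_derive_continuous R_AbsRing R_NormedModule). auto_derive. auto.
Qed.

Lemma RInt_phi_bound a : a <= 0 -> 0 <= RInt phi a 0 <= exp (/2).
Proof.
  intros Ha. split.
  - apply RInt_ge_0; auto. apply phi_ex_RInt. intros; apply phi_ge0.
  - apply Rle_trans with (RInt (fun u => exp (u + /2)) a 0).
    + apply RInt_le; auto. apply phi_ex_RInt. eexists; apply expb_RInt.
      intros; apply phi_bound.
    + rewrite (is_RInt_unique _ _ _ _ (expb_RInt a 0)).
      pose proof (exp_pos (a + /2)). rewrite Rplus_0_l. lra.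
Qed.

Definition Eset (v : R) : Prop := exists a, a <= 0 /\ v = RInt phi a 0.

Lemma Eset_bound : bound Eset.
Proof. exists (exp (/2)). intros v [a [Ha ->]]. apply RInt_phi_bound; auto. Qed.

Lemma Eset_ne : exists v, Eset v.
Proof. exists (RInt phi 0 0). exists 0. split; lra || reflexivity. Qed.

Definition L0 : R := proj1_sig (completeness Eset Eset_bound Eset_ne).

Lemma L0_lub : is_lub Eset L0.
Proof. unfold L0. destruct (completeness Eset Eset_bound Eset_ne); auto. Qed.

Lemma tailS eps : 0 < eps -> exists a0, a0 <= 0 /\
  forall a, a <= a0 -> L0 - eps < RInt phi a 0 <= L0.
Proof.
  intros He. destruct L0_lub as [Hub Hl].
  destruct (Classical_Prop.classic (exists a0, a0 <= 0 /\ L0 - eps < RInt phi a0 0)) as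
    [[a0 [Ha0 Hlt]]|Hn].
  - exists a0. split; auto. intros a Ha. split.
    + rewrite <- (RInt_Chasles phi a a0 0) by apply phi_ex_RInt.
      assert (0 <= RInt phi a a0). { apply RInt_ge_0; auto. apply phi_ex_RInt. intros; apply phi_ge0. }
      simpl. unfold plus; simpl. lra.
    + apply Hub. exists a; split; auto; lra.
  - exfalso. assert (L0 <= L0 - eps); [|lra].
    apply Hl. intros v [a [Ha ->]]. apply Rnot_lt_le. intros Hc. apply Hn. exists a; auto.
Qed.

Lemma ImpTo_of f x v : (forall a, ex_RInt f a x) ->
  (forall eps, 0 < eps -> exists M, forall a, a <= - M -> Rabs (RInt f a x - v) < eps) ->
  ImproperIntegralTo f x v.
Proof.
  intros Hex H eps He. destruct (H eps He) as [M HM]. exists M. intros a Ha.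
  exists (ex_RInt_Reals_0 _ _ _ (Hex a)). rewrite <- RInt_Reals. auto.
Qed.

Lemma ImpR_of f v : (forall a b, ex_RInt f a b) ->
  (forall eps, 0 < eps -> exists M, forall a b, a <= - M -> M <= b -> Rabs (RInt f a b - v) < eps) ->
  ImproperIntegralR f v.
Proof.
  intros Hex H eps He. destruct (H eps He) as [M HM]. exists M. intros a b Ha Hb.
  exists (ex_RInt_Reals_0 _ _ _ (Hex a b)). rewrite <- RInt_Reals. auto.
Qed.

Lemma small_eq v w : (forall eps, 0 < eps -> Rabs (v - w) < eps) -> v = w.
Proof.
  intros H. destruct (Req_dec v w) as [E|E]; auto. exfalso.
  assert (0 < Rabs (v - w)) by (apply Rabs_pos_lt; lra).
  specialize (H _ H0). lra.
Qed.

Lemma IntTo_eq f x v : ImproperIntegralTo f x v -> IntTo f x = v.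
Proof.
  intros Hv. unfold IntTo.
  assert (Hw : ImproperIntegralTo f x (epsilon (inhabits 0) (fun v => ImproperIntegralTo f x v))).
  { apply epsilon_spec. exists v; auto. }
  set (w := epsilon _ _) in *. clearbody w.
  apply small_eq. intros eps He.
  destruct (Hv (eps/2)) as [M1 H1]; [lra|]. destruct (Hw (eps/2)) as [M2 H2]; [lra|].
  set (a := - (Rabs M1 + Rabs M2)).
  destruct (H1 a) as [p1 Hp1]. unfold a; pose proof (Rle_abs M1); pose proof (Rabs_pos M2); lra.
  destruct (H2 a) as [p2 Hp2]. unfold a; pose proof (Rle_abs M2); pose proof (Rabs_pos M1); lra.
  rewrite (RiemannInt_P5 p1 p2) in Hp1.
  replace (w - v) with ((RiemannInt p2 - v) - (RiemannInt p2 - w)) by ring.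
  eapply Rle_lt_trans. apply Rabs_triang. rewrite Rabs_Ropp. lra.
Qed.

Lemma IntR_eq f v : ImproperIntegralR f v -> IntR f = v.
Proof.
  intros Hv. unfold IntR.
  assert (Hw : ImproperIntegralR f (epsilon (inhabits 0) (fun v => ImproperIntegralR f v))).
  { apply epsilon_spec. exists v; auto. }
  set (w := epsilon _ _) in *. clearbody w.
  apply small_eq. intros eps He.
  destruct (Hv (eps/2)) as [M1 H1]; [lra|]. destruct (Hw (eps/2)) as [M2 H2]; [lra|].
  set (a := - (Rabs M1 + Rabs M2)).
  destruct (H1 a (-a)) as [p1 Hp1]; unfold a; pose proof (Rle_abs M1); pose proof (Rabs_pos M2);
   pose proof (Rle_abs M2); pose proof (Rabs_pos M1); try lra.
  destruct (H2 a (-a)) as [p2 Hp2]; unfold a; try lra.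
  rewrite (RiemannInt_P5 p1 p2) in Hp1.
  replace (w - v) with ((RiemannInt p2 - v) - (RiemannInt p2 - w)) by ring.
  eapply Rle_lt_trans. apply Rabs_triang. rewrite Rabs_Ropp. lra.
Qed.

Lemma PhiE z : Phi z = L0 + RInt phi 0 z.
Proof.
  unfold Phi. apply IntTo_eq. apply ImpTo_of. intros; apply phi_ex_RInt.
  intros eps He. destruct (tailS eps He) as [a0 [Ha0 H]]. exists (- a0). intros a Ha.
  rewrite <- (RInt_Chasles phi a 0 z) by apply phi_ex_RInt. simpl; unfold plus; simpl.
  specialize (H a ltac:(lra)). rewrite Rabs_left1; lra.
Qed.

Lemma RInt_phi p q : RInt phi p q = Phi q - Phi p.
Proof.
  rewrite !PhiE. rewrite <- (RInt_Chasles phi p 0 q) by apply phi_ex_RInt. simpl; unfold plus; simpl.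
  assert (RInt phi 0 p + RInt phi p 0 = 0).
  { pose proof (RInt_Chasles phi 0 p 0 (phi_ex_RInt _ _) (phi_ex_RInt _ _)) as Hc.
    rewrite RInt_point in Hc. simpl in Hc; unfold plus, zero in Hc; simpl in Hc. lra. }
  lra.
Qed.

Lemma Phi_tail eps : 0 < eps -> exists T, forall p, p <= T -> 0 <= Phi p < eps.
Proof.
  intros He. destruct (tailS eps He) as [a0 [Ha0 H]]. exists a0. intros p Hp.
  specialize (H p Hp). rewrite PhiE.
  assert (RInt phi 0 p = - RInt phi p 0).
  { pose proof (RInt_Chasles phi 0 p 0 (phi_ex_RInt _ _) (phi_ex_RInt _ _)) as Hc.
    rewrite RInt_point in Hc. simpl in Hc; unfold plus, zero in Hc; simpl in Hc. lra. }
  lra.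
Qed.

Lemma Rfacts m s R : 0 < m -> 0 <= R -> R^2 = (s/2)^2 + m^2 ->
  s/2 < R /\ -(s/2) < R /\ m <= R /\ (0 <= s -> R <= s/2 + m) /\ (s < 0 -> R < -(s/2) + m).
Proof.
  intros Hm HR HE.
  assert (Ha : forall a, 0 <= a -> a^2 < R^2 -> a < R).
  { intros a Ha H. destruct (Rlt_or_le a R); auto. assert (a^2 >= R^2) by nra. lra. }
  assert (0 < m^2) by (apply pow_lt; lra).
  assert (HRp : 0 < R). { destruct (Req_dec R 0) as [E|E]. rewrite E in HE. assert (0 <= (s/2)^2) by apply pow2_ge_0. simpl in *. lra. lra. }
  repeat split.
  - destruct (Rle_or_lt (s/2) 0). lra. apply Ha; lra.
  - destruct (Rle_or_lt (-(s/2)) 0). lra. apply Ha. lra. replace ((-(s/2))^2) with ((s/2)^2) by ring; lra.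
  - destruct (Rle_or_lt m R); auto. nra.
  - intros Hs. destruct (Rle_or_lt R (s/2+m)); auto. nra.
  - intros Hs. destruct (Rlt_or_le R (-(s/2)+m)); auto. nra.
Qed.

Lemma ev_pos u m s R v : 0 < m -> 0 <= R -> R^2 = (s/2)^2 + m^2 -> m < u -> v*u = m^2 ->
  (u - v <= s <-> u <= s/2 + R).
Proof.
  intros Hm HR HE Hu Hv. destruct (Rfacts m s R Hm HR HE) as [H1 [H2 _]].
  assert (Hf : u*(u - v - s) = (u - s/2 - R)*(u - s/2 + R)) by nra.
  split; intros H.
  - destruct (Rle_or_lt u (s/2+R)); auto. assert (0 < (u - s/2 - R)*(u - s/2 + R)) by nra. nra.
  - destruct (Rle_or_lt (u - v) s); auto. assert (0 < u*(u - v - s)) by nra. nra.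
Qed.

Lemma ev_neg u m s R v : 0 < m -> 0 <= R -> R^2 = (s/2)^2 + m^2 -> u < - m -> v*u = m^2 ->
  (u - v <= s <-> u <= s/2 - R).
Proof.
  intros Hm HR HE Hu Hv. destruct (Rfacts m s R Hm HR HE) as [H1 [H2 _]].
  assert (Hf : u*(u - v - s) = (u - s/2 - R)*(u - s/2 + R)) by nra.
  split; intros H.
  - destruct (Rle_or_lt u (s/2-R)); auto. assert ((u - s/2 - R)*(u - s/2 + R) < 0) by nra. nra.
  - destruct (Rle_or_lt (u - v) s); auto. assert (u*(u - v - s) < 0) by nra. nra.
Qed.

Lemma event k mu theta x y R : 0 < k -> 0 < mu -> 0 <= R ->
  R^2 = ((k*theta+x)/2)^2 + (k*mu)^2 ->
  (k*(thetaA mu y - theta) <= x) <->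
  k*y <= (if Rle_dec 0 (k*theta+x) then (k*theta+x)/2 + R else (k*theta+x)/2 - R).
Proof.
  intros Hk Hmu HR HE. set (s := k*theta+x) in *. set (m := k*mu) in *.
  assert (Hm : 0 < m) by (unfold m; nra).
  destruct (Rfacts m s R Hm HR HE) as [F1 [F2 [F3 [F4 F5]]]].
  pose proof (Rle_abs y). pose proof (Rle_abs (-y)). rewrite Rabs_Ropp in *.
  unfold thetaA. destruct (Rle_dec (Rabs y) mu) as [Hy|Hy].
  - assert (k*y <= m) by (unfold m; apply Rmult_le_compat_l; lra).
    assert (-m <= k*y) by (unfold m; replace (-(k*mu)) with (k*(-mu)) by ring; apply Rmult_le_compat_l; lra).
    destruct (Rle_dec 0 s) as [Hs|Hs]; split; intros; unfold s in *; try lra.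
  - destruct (Rle_or_lt 0 y) as [Hy0|Hy0].
    + rewrite Rabs_right in Hy by lra.
      assert (Hu : m < k*y) by (unfold m; apply Rmult_lt_compat_l; lra).
      assert (Hv : (k*(mu^2/y)) * (k*y) = m^2) by (unfold m; field; lra).
      replace (k * (y - mu ^ 2 / y - theta) <= x) with (k*y - k*(mu^2/y) <= s)
        by (unfold s; apply propositional_extensionality; split; intros; nra || lra).
      pose proof (ev_pos (k*y) m s R _ Hm HR HE Hu Hv) as Hev.
      destruct (Rle_dec 0 s) as [Hs|Hs]; auto.
      assert (Hs' : s < 0) by lra. specialize (F5 Hs'). split; intros; lra.
    + rewrite Rabs_left in Hy by lra.
      assert (Hu : k*y < - m) by (unfold m; replace (-(k*mu)) with (k*(-mu)) by ring; apply Rmult_lt_compat_l; lra).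
      assert (Hv : (k*(mu^2/y)) * (k*y) = m^2) by (unfold m; field; lra).
      replace (k * (y - mu ^ 2 / y - theta) <= x) with (k*y - k*(mu^2/y) <= s)
        by (unfold s; apply propositional_extensionality; split; intros; nra || lra).
      pose proof (ev_neg (k*y) m s R _ Hm HR HE Hu Hv) as Hev.
      destruct (Rle_dec 0 s) as [Hs|Hs]; auto.
      specialize (F4 Hs). split; intros; lra.
Qed.

Section Core.
Variable n : nat.
Variable theta : R.
Hypothesis Hk : 0 < sqrt (INR n).
Let k := sqrt (INR n).

Lemma dens_cont y : continuous (ybar_density n theta) y.
Proof.
  apply (@ex_derive_continuous R_AbsRing R_NormedModule).
  unfold ybar_density, phi. auto_derive. assert (0 < PI) by apply PI_RGT_0.
  assert (0 < INR n). { destruct (Rle_or_lt (INR n) 0) as [Hn|Hn]; auto.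
    rewrite sqrt_neg_0 in Hk; lra. }
  repeat split; lra.
Qed.

Lemma dens_ex a b : ex_RInt (ybar_density n theta) a b.
Proof. apply (@ex_RInt_continuous R_CompleteNormedModule). intros; apply dens_cont. Qed.

Lemma dens_RInt a b : RInt (ybar_density n theta) a b = Phi (k * (b - theta)) - Phi (k * (a - theta)).
Proof.
  rewrite (RInt_ext _ (fun y => scal k (phi (k * y + - (k * theta))))).
  rewrite (@RInt_comp_lin R_CompleteNormedModule phi k (- (k * theta))) by apply phi_ex_RInt. rewrite RInt_phi.
  f_equal; f_equal; ring.
  intros x _. unfold ybar_density. fold k. unfold scal; simpl; unfold mult; simpl. f_equal. f_equal. ring.
Qed.

Definition indf (Y : R) := fun y => (if Rle_dec y Y then 1 else 0) * ybar_density n theta y.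

Lemma indf_ex Y a b : ex_RInt (indf Y) a b.
Proof.
  assert (H1 : forall c, c <= Y -> ex_RInt (indf Y) c Y).
  { intros c Hc. apply (ex_RInt_ext (ybar_density n theta)); [|apply dens_ex].
    intros x Hx. rewrite Rmin_left in Hx by auto. rewrite Rmax_right in Hx by auto.
    unfold indf. destruct (Rle_dec x Y); simpl; [ring|lra]. }
  assert (H2 : forall c, Y <= c -> ex_RInt (indf Y) Y c).
  { intros c Hc. apply (ex_RInt_ext (fun _ => 0)).
    intros x Hx. rewrite Rmin_left in Hx by auto. rewrite Rmax_right in Hx by auto.
    unfold indf. destruct (Rle_dec x Y); simpl; [lra|ring].
    apply (@ex_RInt_const R_CompleteNormedModule). }
  apply ex_RInt_Chasles with Y.
  - destruct (Rle_or_lt a Y) as [Ha|Ha]. auto. apply ex_RInt_swap, H2; lra.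
  - destruct (Rle_or_lt Y b) as [Hb|Hb]. auto. apply ex_RInt_swap, H1; lra.
Qed.

Lemma core1 Y : ImproperIntegralR (indf Y) (Phi (k * (Y - theta))).
Proof.
  apply ImpR_of. apply indf_ex.
  intros eps He. destruct (Phi_tail eps He) as [T HT].
  exists (Rabs Y + 1 + Rabs theta + Rabs T / k). intros a b Ha Hb.
  assert (0 <= Rabs T / k) by (apply Rle_mult_inv_pos; [apply Rabs_pos|exact Hk]).
  pose proof (Rle_abs Y). pose proof (Rle_abs (-Y)). rewrite Rabs_Ropp in *.
  pose proof (Rle_abs theta). pose proof (Rle_abs (-theta)). rewrite Rabs_Ropp in *.
  pose proof (Rle_abs T). pose proof (Rle_abs (-T)). rewrite Rabs_Ropp in *.
  rewrite <- (RInt_Chasles (indf Y) a Y b) by apply indf_ex.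
  simpl; unfold plus; simpl.
  rewrite (RInt_ext (indf Y) (ybar_density n theta) a Y).
  rewrite (RInt_ext (indf Y) (fun _ => 0) Y b).
  rewrite RInt_const. rewrite dens_RInt. unfold scal; simpl; unfold mult; simpl.
  assert (Hp : k * (a - theta) <= T).
  { assert (Hm : k * (a - theta) <= k * (- (Rabs T / k))).
    { apply Rmult_le_compat_l. left; exact Hk. set (q := Rabs T / k) in *. lra. }
    replace (k * (- (Rabs T / k))) with (- Rabs T) in Hm by (field; unfold k; lra). lra. }
  specialize (HT _ Hp). rewrite Rabs_left1; lra.
  - intros x Hx. rewrite Rmin_left in Hx by lra. rewrite Rmax_right in Hx by lra.
    unfold indf. destruct (Rle_dec x Y); simpl; [lra|ring].
  - intros x Hx. rewrite Rmin_left in Hx by lra. rewrite Rmax_right in Hx by lra.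
    unfold indf. destruct (Rle_dec x Y); simpl; [ring|lra].
Qed.
End Core.

Lemma FA_val n mu theta x : (1 <= n)%nat -> 0 < mu ->
  F_A n mu theta x = Phi (if Rle_dec 0 (sqrt (INR n) * theta + x) then z2 n mu theta x else z1 n mu theta x).
Proof.
  intros Hn Hmu.
  assert (HnR : 0 < INR n) by (apply lt_0_INR; lia).
  assert (Hk : 0 < sqrt (INR n)) by (apply sqrt_lt_R0; auto).
  set (k := sqrt (INR n)) in *.
  assert (Hk2 : k^2 = INR n) by (unfold k; apply pow2_sqrt; lra).
  set (R := sqrt (((k * theta + x) / 2) ^ 2 + INR n * mu ^ 2)).
  assert (Harg : 0 <= ((k * theta + x) / 2) ^ 2 + INR n * mu ^ 2).
  { assert (0 <= ((k * theta + x) / 2) ^ 2) by apply pow2_ge_0.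
    assert (0 <= mu^2) by apply pow2_ge_0. nra. }
  assert (HR : 0 <= R) by apply sqrt_pos.
  assert (HE : R^2 = ((k*theta+x)/2)^2 + (k*mu)^2).
  { unfold R. rewrite pow2_sqrt by auto. rewrite Rpow_mult_distr, Hk2. ring. }
  set (U := if Rle_dec 0 (k*theta+x) then (k*theta+x)/2 + R else (k*theta+x)/2 - R).
  unfold F_A. fold k.
  rewrite (functional_extensionality _ (indf n theta (U / k))).
  - rewrite (IntR_eq _ _ (core1 n theta Hk (U / k))).
    f_equal. replace (k * (U / k - theta)) with (U - k * theta) by (field; lra).
    unfold U, z1, z2. fold k. fold R. destruct (Rle_dec 0 (k * theta + x)); field; lra.
  - intros y. unfold indf. f_equal.
    pose proof (event k mu theta x y R Hk Hmu HR HE) as Hev. fold U in Hev.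
    assert (Hy : k*y <= U <-> y <= U/k).
    { split; intros H. apply Rmult_le_reg_l with k; auto. replace (k*(U/k)) with U by (field; lra). auto.
      apply Rmult_le_compat_l with (r := k) in H; [|lra]. replace (k*(U/k)) with U in H by (field; lra). auto. }
    destruct (Rle_dec (k * (thetaA mu y - theta)) x); destruct (Rle_dec y (U/k)); tauto.
Qed.

Section Part2.
Variables (n : nat) (mu theta : R).
Hypothesis Hn : 0 < INR n.
Hypothesis Hmu : 0 < mu.

Lemma qpos x : 0 < ((sqrt (INR n) * theta + x) / 2) ^ 2 + INR n * mu ^ 2.
Proof.
  assert (0 <= ((sqrt (INR n) * theta + x) / 2) ^ 2) by apply pow2_ge_0.
  assert (0 < mu^2) by (apply pow_lt; lra). nra.
Qed.

Lemma z1_der x : is_derive (z1 n mu theta) x ((1 - t_nt n mu theta x) / 2).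
Proof.
  unfold z1. auto_derive. apply qpos.
  unfold t_nt. pose proof (qpos x). assert (0 < sqrt (((sqrt (INR n) * theta + x) / 2) ^ 2 + INR n * mu ^ 2)) by (apply sqrt_lt_R0; auto).
  set (S := sqrt (((sqrt (INR n) * theta + x) / 2) ^ 2 + INR n * mu ^ 2)) in *.
  match goal with |- context [sqrt ?a] => replace (sqrt a) with S by (unfold S; f_equal; unfold Rdiv; ring) end.
  field. lra.
Qed.

Lemma z2_der x : is_derive (z2 n mu theta) x ((1 + t_nt n mu theta x) / 2).
Proof.
  unfold z2. auto_derive. apply qpos.
  unfold t_nt. pose proof (qpos x). assert (0 < sqrt (((sqrt (INR n) * theta + x) / 2) ^ 2 + INR n * mu ^ 2)) by (apply sqrt_lt_R0; auto).
  set (S := sqrt (((sqrt (INR n) * theta + x) / 2) ^ 2 + INR n * mu ^ 2)) in *.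
  match goal with |- context [sqrt ?a] => replace (sqrt a) with S by (unfold S; f_equal; unfold Rdiv; ring) end.
  field. lra.
Qed.

Ltac fixq n mu theta x :=
  repeat match goal with |- context [sqrt ?a] =>
    progress replace a with (((sqrt (INR n) * theta + x) / 2) ^ 2 + INR n * mu ^ 2) by (unfold Rdiv; ring) end.

Lemma t_cont1 x : continuous (fun y => (1 - t_nt n mu theta y) / 2) x.
Proof.
  apply (@ex_derive_continuous R_AbsRing R_NormedModule).
  unfold t_nt. auto_derive. pose proof (qpos x).
  assert (0 < sqrt (((sqrt (INR n) * theta + x) / 2) ^ 2 + INR n * mu ^ 2)) by (apply sqrt_lt_R0; auto).
  fixq n mu theta x. repeat split; auto; lra.
Qed.

Lemma t_cont2 x : continuous (fun y => (1 + t_nt n mu theta y) / 2) x.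
Proof.
  apply (@ex_derive_continuous R_AbsRing R_NormedModule).
  unfold t_nt. auto_derive. pose proof (qpos x).
  assert (0 < sqrt (((sqrt (INR n) * theta + x) / 2) ^ 2 + INR n * mu ^ 2)) by (apply sqrt_lt_R0; auto).
  fixq n mu theta x. repeat split; auto; lra.
Qed.

Definition g1 y := (1 - t_nt n mu theta y) / 2 * phi (z1 n mu theta y).
Definition g2 y := (1 + t_nt n mu theta y) / 2 * phi (z2 n mu theta y).

Lemma g1_RInt a b : is_RInt g1 a b (Phi (z1 n mu theta b) - Phi (z1 n mu theta a)).
Proof.
  rewrite <- RInt_phi.
  apply (@is_RInt_comp R_CompleteNormedModule phi (z1 n mu theta) (fun y => (1 - t_nt n mu theta y) / 2)).
  intros; apply phi_cont. intros; split. apply z1_der. apply t_cont1.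
Qed.

Lemma g2_RInt a b : is_RInt g2 a b (Phi (z2 n mu theta b) - Phi (z2 n mu theta a)).
Proof.
  rewrite <- RInt_phi.
  apply (@is_RInt_comp R_CompleteNormedModule phi (z2 n mu theta) (fun y => (1 + t_nt n mu theta y) / 2)).
  intros; apply phi_cont. intros; split. apply z2_der. apply t_cont2.
Qed.

Let c := - (sqrt (INR n) * theta).

Lemma ac_left y : y < c -> ac_density n mu theta y = g1 y.
Proof.
  intros H. unfold c in H. unfold ac_density, g1.
  destruct (Rlt_dec 0 (sqrt (INR n) * theta + y)); [lra|].
  destruct (Rlt_dec (sqrt (INR n) * theta + y) 0); [|lra]. field.
Qed.

Lemma ac_right y : c < y -> ac_density n mu theta y = g2 y.
Proof.
  intros H. unfold c in H. unfold ac_density, g2.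
  destruct (Rlt_dec 0 (sqrt (INR n) * theta + y)); [|lra].
  destruct (Rlt_dec (sqrt (INR n) * theta + y) 0); [lra|]. field.
Qed.

Lemma ac_ex a b : ex_RInt (ac_density n mu theta) a b.
Proof.
  assert (H1 : forall d, d <= c -> ex_RInt (ac_density n mu theta) d c).
  { intros d Hd. apply (ex_RInt_ext g1). 2: eexists; apply g1_RInt.
    intros x Hx. rewrite Rmin_left in Hx by auto. rewrite Rmax_right in Hx by auto.
    symmetry; apply ac_left; lra. }
  assert (H2 : forall d, c <= d -> ex_RInt (ac_density n mu theta) c d).
  { intros d Hd. apply (ex_RInt_ext g2). 2: eexists; apply g2_RInt.
    intros x Hx. rewrite Rmin_left in Hx by auto. rewrite Rmax_right in Hx by auto.
    symmetry; apply ac_right; lra. }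
  apply ex_RInt_Chasles with c.
  - destruct (Rle_or_lt a c) as [Ha|Ha]. auto. apply ex_RInt_swap, H2; lra.
  - destruct (Rle_or_lt c b) as [Hb|Hb]. auto. apply ex_RInt_swap, H1; lra.
Qed.


Lemma sq_c : sqrt (((sqrt (INR n) * theta + c) / 2) ^ 2 + INR n * mu ^ 2) = sqrt (INR n) * mu.
Proof.
  unfold c. replace (((sqrt (INR n) * theta + - (sqrt (INR n) * theta)) / 2) ^ 2 + INR n * mu ^ 2)
    with ((sqrt (INR n) * mu)^2).
  apply sqrt_pow2. assert (0 <= sqrt (INR n)) by apply sqrt_pos. nra.
  rewrite Rpow_mult_distr, pow2_sqrt by lra. field.
Qed.

Lemma z1_c : z1 n mu theta c = sqrt (INR n) * (- theta - mu).
Proof. unfold z1. rewrite sq_c. unfold c. field. Qed.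
Lemma z2_c : z2 n mu theta c = sqrt (INR n) * (- theta + mu).
Proof. unfold z2. rewrite sq_c. unfold c. field. Qed.

Lemma z1_le a : z1 n mu theta a <= - (sqrt (INR n) * theta - a) / 2.
Proof. unfold z1. pose proof (sqrt_pos (((sqrt (INR n) * theta + a) / 2) ^ 2 + INR n * mu ^ 2)). lra. Qed.

Lemma part2 x : IntTo (ac_density n mu theta) x =
  Phi (if Rle_dec 0 (sqrt (INR n) * theta + x) then z2 n mu theta x else z1 n mu theta x)
  - (if Rle_dec 0 (sqrt (INR n) * theta + x) then atom_mass n mu theta else 0).
Proof.
  apply IntTo_eq. apply ImpTo_of. intros; apply ac_ex.
  intros eps He. destruct (Phi_tail eps He) as [T HT].
  exists (Rabs x + Rabs c + 1 + 2 * Rabs T + Rabs (sqrt (INR n) * theta)). intros a Ha.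
  pose proof (Rle_abs x). pose proof (Rle_abs (-x)). pose proof (Rle_abs c). pose proof (Rle_abs T). pose proof (Rle_abs (-T)).
  pose proof (Rle_abs (sqrt (INR n) * theta)). pose proof (Rle_abs (-(sqrt (INR n) * theta))). rewrite !Rabs_Ropp in *.
  pose proof (Rabs_pos x). pose proof (Rabs_pos c). pose proof (Rabs_pos (sqrt (INR n) * theta)). pose proof (Rabs_pos T).
  assert (Hz : z1 n mu theta a <= T) by (pose proof (z1_le a); lra).
  specialize (HT _ Hz).
  assert (Hcc : c = - (sqrt (INR n) * theta)) by reflexivity.
  destruct (Rle_dec 0 (sqrt (INR n) * theta + x)) as [Hs|Hs].
  - rewrite <- (RInt_Chasles _ a c x) by apply ac_ex. simpl; unfold plus; simpl.
    rewrite (RInt_ext _ g1 a c). rewrite (RInt_ext _ g2 c x).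
    rewrite (is_RInt_unique _ _ _ _ (g1_RInt a c)). rewrite (is_RInt_unique _ _ _ _ (g2_RInt c x)).
    rewrite z1_c, z2_c. unfold atom_mass.
    rewrite Rabs_left1; lra.
    + intros y Hy. rewrite Rmin_left in Hy by lra. rewrite Rmax_right in Hy by lra. apply ac_right; lra.
    + intros y Hy. rewrite Rmin_left in Hy by lra. rewrite Rmax_right in Hy by lra. apply ac_left; lra.
  - rewrite (RInt_ext _ g1 a x). rewrite (is_RInt_unique _ _ _ _ (g1_RInt a x)).
    rewrite Rabs_left1; lra.
    intros y Hy. rewrite Rmin_left in Hy by lra. rewrite Rmax_right in Hy by lra. apply ac_left; lra.
Qed.
End Part2.

Theorem mainTheorem5 (n : nat) (mu theta : R) :
  (1 <= n)%nat -> 0 < mu ->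
  (forall x : R,
     F_A n mu theta x =
       (if Rle_dec 0 (sqrt (INR n) * theta + x) then 1 else 0) * Phi (z2 n mu theta x)
     + (if Rlt_dec (sqrt (INR n) * theta + x) 0 then 1 else 0) * Phi (z1 n mu theta x))
  /\
  (forall x : R,
     F_A n mu theta x =
       (if Rle_dec (- (sqrt (INR n) * theta)) x then 1 else 0) * atom_mass n mu theta
     + IntTo (ac_density n mu theta) x).
Proof.
  intros Hn Hmu. assert (HnR : 0 < INR n) by (apply lt_0_INR; lia).
  split; intros x; rewrite (FA_val n mu theta x Hn Hmu).
  - destruct (Rle_dec 0 (sqrt (INR n) * theta + x));
      destruct (Rlt_dec (sqrt (INR n) * theta + x) 0); try lra; ring.
  - rewrite (part2 n mu theta HnR Hmu x).
    destruct (Rle_dec (- (sqrt (INR n) * theta)) x);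
      destruct (Rle_dec 0 (sqrt (INR n) * theta + x)); try lra; ring.
Qed.
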